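(* On $\mathrm{Stem}_T^2(D,A\otimes\mathbb R^{2^\tau})$ one has $\Delta_T=\partial_T\overline\partial_T=\overline\partial_T\partial_T$.
   Context: $A$ is a finite-dimensional associative real algebra with unit and $*$-involution; $V\subseteq A$ has a basis $(v_0=1,v_1,\dots,v_N)$ with $v_s$ ($s\ge1$) satisfying $v_s^2=-1$ and pairwise anticommuting; $\mathbb R_{0,t_0}=\mathrm{Span}_{\mathbb R}(v_0,\dots,v_{t_0})$. $T=(t_0,\dots,t_\tau)$ with $0\le t_0<\dots<t_\tau=N$. $\mathscr P(\tau)$ is the power set of $\{1,\dots,\tau\}$; $\overline\beta^h$ is $\beta\in\mathbb R^\tau$ with $\beta_h$ replaced by $-\beta_h$. $D\subseteq\mathbb R_{0,t_0}\times\mathbb R^\tau$ is open and invariant under $(\alpha,\beta)\mapsto(\alpha,\overline\beta^h)$. A $T$-stem function is $F=\sum_KE_KF_K:D\to A\otimes\mathbb R^{2^\tau}$ with $F_K(\alpha,\overline\beta^h)=F_K(\alpha,\beta)$ if $h\notin K$ and $=-F_K(\alpha,\beta)$ if $h\in K$; $\mathrm{Stem}^p_T(D,A\otimes\mathbb R^{2^\tau})$ consists of those with $C^p$ components. Writing $\alpha=\sum_{s=0}^{t_0}x_sv_s$, $\partial_{\alpha_s}$, $\partial_{\beta_h}$ are partial derivatives in $x_s$, $\beta_h$; $\overline\partial_\alpha=\partial_{\alpha_0}+\sum_{s=1}^{t_0}v_s\partial_{\alpha_s}$, $\partial_\alpha=\partial_{\alpha_0}-\sum_{s=1}^{t_0}v_s\partial_{\alpha_s}$,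 $\overline\partial^u_\alpha=\partial_{\alpha_0}-(-1)^u\sum_{s=1}^{t_0}v_s\partial_{\alpha_s}$ for $u\in\mathbb N$. $\sigma(h,K)\in\{0,1\}$ is the parity of the number of elements of $K$ that are $\le h$. The operators are: $(\overline\partial_TF)_K=\overline\partial_\alpha^{|K|+1}F_K+\sum_{h=1}^\tau(-1)^{\sigma(h,K)+1}\partial_{\beta_h}F_{K\triangle\{h\}}$, $(\partial_TF)_K=\overline\partial_\alpha^{|K|}F_K+\sum_{h=1}^\tau(-1)^{\sigma(h,K)}\partial_{\beta_h}F_{K\triangle\{h\}}$, $(\Delta_TF)_K=\partial_\alpha\overline\partial_\alpha F_K+\sum_{h=1}^\tau\partial_{\beta_h}^2F_K$; they map $T$-stem functions to $T$-stem functions. *)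

(* Defs.v *)
From HB Require Import structures.
From mathcomp Require Import all_boot all_order all_algebra falgebra.
From mathcomp Require Import all_classical all_reals all_analysis.
Set Implicit Arguments. Unset Strict Implicit. Unset Printing Implicit Defensive.
Import Order.TTheory GRing.Theory Num.Theory.
Import numFieldTopology.Exports numFieldNormedType.Exports.
Local Open Scope classical_set_scope.
Local Open Scope ring_scope.

(* Points of R_{0,t0} x R^tau: alpha = sum_s x_s v_s is encoded by its real
   coordinates x = (x_0,...,x_t0), beta = (beta_1,...,beta_tau).         *)
Notation pt R t0 tau := ('rV[R]_(t0.+1) * 'rV[R]_tau)%type.

Section StemDefs.
Variable R : realType.

(* Real coordinates of A are taken in the basis vbasis fullv
   (coordA / ofcoordA below); C^p and partial derivatives of A-valued
   functions are defined through these real components.                  *)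

Definition is_star_involution (A : falgType R) (star : A -> A) : Prop :=
  [/\ forall (a : R) (x y : A), star (a *: x + y) = a *: star x + star y,
      forall x y : A, star (x * y) = star y * star x
    & forall x : A, star (star x) = x].

Definition clifford_basis (A : falgType R) (N : nat) (v : nat -> A) : Prop :=
  [/\ v 0%N = 1,
      free [seq v i | i <- iota 0 N.+1],
      forall s : nat, (1 <= s <= N)%N -> v s * v s = -1
    & forall s r : nat, (1 <= s <= N)%N -> (1 <= r <= N)%N -> s != r ->
        v s * v r = - (v r * v s)].

Definition T_sequence (tau N : nat) (t : 'I_tau.+1 -> nat) : Prop :=
  (forall i j : 'I_tau.+1, (i < j)%N -> (t i < t j)%N) /\ t ord_max = N.


(* beta with beta_h replaced by - beta_h  (h : 'I_tau encodes h+1). *)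
Definition flipb (tau : nat) (h : 'I_tau) (b : 'rV[R]_tau) : 'rV[R]_tau :=
  \row_j (if j == h then - b 0 j else b 0 j).

Definition flip_invariant (t0 tau : nat) (D : set (pt R t0 tau)) : Prop :=
  forall (h : 'I_tau) (p : pt R t0 tau), D p -> D (p.1, flipb h p.2).

Definition dirA (t0 tau : nat) (s : 'I_t0.+1) : pt R t0 tau :=
  (delta_mx 0 s, 0).
Definition dirB (t0 tau : nat) (h : 'I_tau) : pt R t0 tau :=
  (0, delta_mx 0 h).
Definition cdir (t0 tau : nat) (i : 'I_t0.+1 + 'I_tau) : pt R t0 tau :=
  match i with inl s => dirA tau s | inr h => dirB t0 h end.

Definition lineR (t0 tau : nat) (W : Type) (g : pt R t0 tau -> W)
  (p d : pt R t0 tau) : R -> W :=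
  fun r => g (p.1 + r *: d.1, p.2 + r *: d.2).

Definition pdV (t0 tau : nat) (W : normedModType R) (d : pt R t0 tau)
  (g : pt R t0 tau -> W) : pt R t0 tau -> W :=
  fun p => 'D_1 (lineR g p d) 0.

Definition C2_on (t0 tau : nat) (W : normedModType R) (D : set (pt R t0 tau))
  (g : pt R t0 tau -> W) : Prop :=
  forall p, D p ->
  [/\ {for p, continuous g},
      forall i, derivable (lineR g p (cdir i)) 0 1 /\
                {for p, continuous (pdV (cdir i) g)}
    & forall i j, derivable (lineR (pdV (cdir i) g) p (cdir j)) 0 1 /\
                {for p, continuous (pdV (cdir j) (pdV (cdir i) g))}].

Variable A : falgType R.

Definition coordA (x : A) : 'rV[R]_(\dim {:A}) := passmx.rVof (vbasis fullv) x.
Definition ofcoordA (r : 'rV[R]_(\dim {:A})) : A := passmx.vecof (vbasis fullv) r.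

Definition C2_onA (t0 tau : nat) (D : set (pt R t0 tau)) (f : pt R t0 tau -> A)
  : Prop := C2_on D (fun p => coordA (f p)).

Definition pdA (t0 tau : nat) (d : pt R t0 tau) (f : pt R t0 tau -> A)
  : pt R t0 tau -> A :=
  fun p => ofcoordA (pdV d (fun q => coordA (f q)) p).

Definition d_alpha_s (t0 tau : nat) (s : 'I_t0.+1) (f : pt R t0 tau -> A) :=
  pdA (dirA tau s) f.
Definition d_beta_h (t0 tau : nat) (h : 'I_tau) (f : pt R t0 tau -> A) :=
  pdA (dirB t0 h) f.

Variable v : nat -> A.

Definition dbar_u (t0 tau : nat) (u : nat) (f : pt R t0 tau -> A) :
  pt R t0 tau -> A :=
  fun p => d_alpha_s ord0 f p -
    (-1) ^+ u * \sum_(s < t0.+1 | (0 < s)%N) v s * d_alpha_s s f p.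

Definition dbar_alpha (t0 tau : nat) (f : pt R t0 tau -> A) := dbar_u 1 f.
Definition d_alpha (t0 tau : nat) (f : pt R t0 tau -> A) := dbar_u 0 f.

(* A T-stem function F = sum_K E_K F_K is encoded by the family (F_K)_K,
   K ranging over subsets of {1..tau} (encoded as {set 'I_tau}). *)
Definition stemfam (t0 tau : nat) := {set 'I_tau} -> pt R t0 tau -> A.

Definition is_stem (t0 tau : nat) (D : set (pt R t0 tau)) (F : stemfam t0 tau)
  : Prop :=
  forall (K : {set 'I_tau}) (h : 'I_tau) (p : pt R t0 tau), D p ->
    F K (p.1, flipb h p.2) = (if h \in K then - F K p else F K p).

Definition sigma (tau : nat) (h : 'I_tau) (K : {set 'I_tau}) : nat :=
  odd #|[set k in K | (k <= h)%N]|.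

Definition symdiff1 (tau : nat) (K : {set 'I_tau}) (h : 'I_tau) :=
  (K :\: [set h]) :|: ([set h] :\: K).

Definition dbarT (t0 tau : nat) (F : stemfam t0 tau) : stemfam t0 tau :=
  fun K p => dbar_u #|K|.+1 (F K) p +
    \sum_(h < tau) (-1) ^+ (sigma h K + 1) *: d_beta_h h (F (symdiff1 K h)) p.

Definition dT (t0 tau : nat) (F : stemfam t0 tau) : stemfam t0 tau :=
  fun K p => dbar_u #|K| (F K) p +
    \sum_(h < tau) (-1) ^+ (sigma h K) *: d_beta_h h (F (symdiff1 K h)) p.

Definition LapT (t0 tau : nat) (F : stemfam t0 tau) : stemfam t0 tau :=
  fun K p => d_alpha (dbar_alpha (F K)) p +
    \sum_(h < tau) d_beta_h h (d_beta_h h (F K)) p.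

End StemDefs.

(* Main.v *)
Require Import Defs.
From HB Require Import structures.
From mathcomp Require Import all_boot all_order all_algebra falgebra.
From mathcomp Require Import all_classical all_reals all_analysis.
From mathcomp Require Import ring lra.
Import Order.TTheory GRing.Theory Num.Theory.
Import numFieldTopology.Exports numFieldNormedType.Exports.
Local Open Scope classical_set_scope.
Local Open Scope ring_scope.
Set Implicit Arguments. Unset Strict Implicit.

Lemma mvt0 (R : realType) (f df : R -> R) (s : R) :
  (forall x : R, `|x| <= `|s| -> is_derive x (1:R) f (df x)) ->
  exists c, `|c| <= `|s| /\ f s - f 0 = df c * s.
Proof.
move=> H.
case: (leP 0 s) => hs.
- have Hd : forall x, x \in `[0, s] -> `|x| <= `|s|.
    move=> x; rewrite in_itv /= => /andP[h1 h2].
    by rewrite !ger0_norm //; lra.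
  have [c cin E] := @MVT_segment R f df 0 s hs
     (fun x xi => H x (Hd x (subset_itv_oo_cc xi))) 
     (derivable_within_continuous (fun x xi => @ex_derive _ _ _ _ _ _ _ (H x (Hd x xi)))).
  by exists c; split; [exact: Hd | rewrite E subr0].
- have hs' : s <= 0 by lra.
  have Hd : forall x, x \in `[s, 0] -> `|x| <= `|s|.
    move=> x; rewrite in_itv /= => /andP[h1 h2].
    by rewrite !ler0_norm //; lra.
  have [c cin E] := @MVT_segment R f df s 0 hs'
     (fun x xi => H x (Hd x (subset_itv_oo_cc xi))) 
     (derivable_within_continuous (fun x xi => @ex_derive _ _ _ _ _ _ _ (H x (Hd x xi)))).
  exists c; split; [exact: Hd|].
  have -> : f s - f 0 = - (f 0 - f s) by ring.
  rewrite E; ring.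
Qed.
Lemma schwarz_abs (R : realType) (Φ Φ1 Φ12 : R -> R -> R) (Ψ : R -> R) (δ : R) :
  0 < δ ->
  (forall s t : R, `|s| < δ -> `|t| < δ -> is_derive s (1:R) (fun σ => Φ σ t) (Φ1 s t)) ->
  (forall s t : R, `|s| < δ -> `|t| < δ -> is_derive t (1:R) (Φ1 s) (Φ12 s t)) ->
  (forall s : R, `|s| < δ -> is_derive (0:R) (1:R) (Φ s) (Ψ s)) ->
  (forall e : R, 0 < e -> exists2 η : R, 0 < η &
      forall s t : R, `|s| < η -> `|t| < η -> `|Φ12 s t - Φ12 0 0| <= e) ->
  'D_1 Ψ 0 = Φ12 0 0.
Proof.
move=> δp H1 H2 H3 Hc.
set c := Φ12 0 0.
have stepA : forall e : R, 0 < e -> exists2 η : R, 0 < η &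
    forall s : R, `|s| < η -> `|Ψ s - Ψ 0 - s * c| <= e * `|s|.
  move=> e ep; have [η0 η0p Hη] := Hc e ep.
  pose η := Num.min η0 δ.
  have ηp : 0 < η by rewrite lt_min η0p δp.
  have ηa : η <= η0 by rewrite ge_min lexx.
  have ηb : η <= δ by rewrite ge_min lexx orbT.
  exists η => // s hs.
  have claimB : forall t : R, t != 0 -> `|t| < η ->
      `|t^-1 * ((Φ s t - Φ s 0) - (Φ 0 t - Φ 0 0)) - s * c| <= e * `|s|.
    move=> t t0 ht.
    pose g := fun σ => Φ σ t - Φ σ 0.
    have [σ [hσ Eσ]] : exists σ, `|σ| <= `|s| /\ g s - g 0 = (Φ1 σ t - Φ1 σ 0) * s.
      apply: mvt0 => x hx.
      have hx' : `|x| < δ by apply: (le_lt_trans hx); apply: (lt_le_trans hs).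
      have ht' : `|t| < δ by apply: (lt_le_trans ht).
      have h0 : `|0 : R| < δ by rewrite normr0.
      exact: is_deriveB (H1 x t hx' ht') (H1 x 0 hx' h0).
    have hσ' : `|σ| < δ by apply: (le_lt_trans hσ); apply: (lt_le_trans hs).
    have [τ [hτ Eτ]] : exists τ, `|τ| <= `|t| /\ Φ1 σ t - Φ1 σ 0 = Φ12 σ τ * t.
      apply: mvt0 => x hx.
      have hx' : `|x| < δ by apply: (le_lt_trans hx); apply: (lt_le_trans ht).
      exact: H2.
    have -> : (Φ s t - Φ s 0) - (Φ 0 t - Φ 0 0) = g s - g 0 by rewrite /g.
    rewrite Eσ Eτ.
    have -> : t^-1 * (Φ12 σ τ * t * s) - s * c = (Φ12 σ τ - c) * s.
      by field.
    rewrite normrM ler_wpM2r //.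
    apply: Hη.
      by apply: (le_lt_trans hσ); apply: (lt_le_trans hs).
    by apply: (le_lt_trans hτ); apply: (lt_le_trans ht).
  have cv : (fun t : R => t^-1 *: (Φ s (t *: 1 + 0) - Φ s 0) - t^-1 *: (Φ 0 (t *: 1 + 0) - Φ 0 0)) @ 0^' --> Ψ s - Ψ 0.
    have hs' : `|s| < δ by apply: (lt_le_trans hs).
    have h0 : `|0 : R| < δ by rewrite normr0.
    have d1 := @ex_derive _ _ _ _ _ _ _ (H3 s hs').
    have d2 := @ex_derive _ _ _ _ _ _ _ (H3 0 h0).
    rewrite -(@derive_val _ _ _ _ _ _ _ (H3 s hs')) -(@derive_val _ _ _ _ _ _ _ (H3 0 h0)).
    exact: cvgB d1 d2.
  apply/ler_addgt0Pr => eps epsp.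
  have := (cvgrPdist_le _ _).1 cv eps epsp.
  move=> nb.
  have : \forall t \near (0:R)^', (`|Ψ s - Ψ 0 - (t^-1 *: (Φ s (t *: 1 + 0) - Φ s 0) - t^-1 *: (Φ 0 (t *: 1 + 0) - Φ 0 0))| <= eps)
          /\ `|t| < η /\ t != 0.
    near=> t; split; [near: t; exact: nb|split].
      by near: t; exact: dnbhs0_lt.
    by near: t; exact: nbhs_dnbhs_neq.
  move=> /filter_ex [t [ht1 [ht2 ht3]]].
  have := claimB t ht3 ht2.
  move=> hB.
  move: ht1.
  set q := (X in `|_ - X|).
  have -> : q = t^-1 * ((Φ s t - Φ s 0) - (Φ 0 t - Φ 0 0)).
    rewrite /q.
    have E : forall x y : R, x *: y = x * y by [].
    by rewrite !E !mulr1 !addr0; ring.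
  move=> ht1.
  set q' := t^-1 * _ in ht1 hB.
  have -> : Ψ s - Ψ 0 - s * c = (Ψ s - Ψ 0 - q') + (q' - s * c).
    by rewrite addrA subrK.
  apply: le_trans (ler_normD _ _) _.
  by rewrite [X in _ <= X]addrC; apply: lerD.
apply: cvg_lim => //.
apply/cvgrPdist_le => e ep.
have [η ηp Hη] := stepA e ep.
near=> h.
have hne : h != 0 by near: h; exact: nbhs_dnbhs_neq.
have hlt : `|h| < η by near: h; exact: dnbhs0_lt.
have E : forall x y : R, x *: y = x * y by [].
rewrite /= !E mulr1 addr0.
have -> : c - h^-1 * (Ψ h - Ψ 0) = - h^-1 * (Ψ h - Ψ 0 - h * c) by field.
rewrite normrM normrN normfV.
rewrite ler_pdivrMl ?normr_gt0 // [X in _ <= X]mulrC.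
exact: Hη.
Unshelve. all: by end_near.
Qed.

Section P2.
Variable R : realType.
Variables t0 tau : nat.
Local Notation PT := (pt R t0 tau).

Definition pt2 (p d1 d2 : PT) (s t : R) : PT :=
  (p.1 + s *: d1.1 + t *: d2.1, p.2 + s *: d1.2 + t *: d2.2).

Lemma pt2_00 p d1 d2 : pt2 p d1 d2 0 0 = p.
Proof. by rewrite /pt2 !scale0r !addr0; case: p. Qed.

Lemma lineR_pt2_1 (W : Type) (g : PT -> W) p d1 d2 s t :
  lineR g (pt2 p d1 d2 s t) d1 = fun r => g (pt2 p d1 d2 (s + r) t).
Proof.
apply/funext => r; rewrite /lineR /pt2 /=.
by congr (g (_, _)); rewrite scalerDl addrA [RHS]addrAC.
Qed.

Lemma lineR_pt2_2 (W : Type) (g : PT -> W) p d1 d2 s t :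
  lineR g (pt2 p d1 d2 s t) d2 = fun r => g (pt2 p d1 d2 s (t + r)).
Proof.
apply/funext => r; rewrite /lineR /pt2 /=.
congr (g (_, _)).
  by rewrite scalerDl addrA.
by rewrite scalerDl addrA.
Qed.

Lemma shift_fun (W : normedModType R) (f : R -> W) (s : R) :
  (fun h : R => h^-1 *: (((fun r => f (s + r)) \o shift 0) (h *: (1:R)) - f (s + 0)))
  = (fun h : R => h^-1 *: ((f \o shift s) (h *: (1:R)) - f s)).
Proof. by apply/funext => h; rewrite /= !addr0 [s + _]addrC. Qed.

Lemma derivable_shift (W : normedModType R) (f : R -> W) (s : R) :
  derivable (fun r => f (s + r)) 0 1 -> is_derive s (1:R) f ('D_1 (fun r => f (s + r)) 0).
Proof.
move=> H; have H' : derivable f s 1 by move: H; rewrite /derivable shift_fun.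
apply: DeriveDef => //.
by rewrite /derive shift_fun.
Qed.

Lemma comp_derive n (G : R -> 'rV[R]_n) (a : R) (c : 'I_n) :
  derivable G a 1 -> derivable (fun x => G x 0 c) a 1 /\
   'D_1 (fun x => G x 0 c) a = ('D_1 G a) 0 c.
Proof.
move=> H; split; first by move/derivable_mxP : H; apply.
by rewrite derive_mx // mxE.
Qed.

End P2.

Section P3.
Variable R : realType.
Variables t0 tau : nat.
Local Notation PT := (pt R t0 tau).

Lemma norm2_le m (x y : 'rV[R]_m) (s t : R) (η : R) :
  `|s| < η -> `|t| < η -> `|s *: x + t *: y| <= η * (`|x| + `|y|).
Proof.
move=> hs ht; apply: le_trans (ler_normD _ _) _.
rewrite !normrZ mulrDr; apply: lerD; apply: ler_wpM2r => //; exact: ltW.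
Qed.

Lemma pt2_ball (p d1 d2 : PT) (e : R) : 0 < e ->
  exists2 η : R, 0 < η & forall s t : R, `|s| < η -> `|t| < η ->
    ball p e (pt2 p d1 d2 s t).
Proof.
move=> ep.
pose M := `|d1.1| + `|d2.1| + `|d1.2| + `|d2.2| + 1.
have Mp : 0 < M by rewrite /M; apply: ltr_wpDl => //; rewrite !addr_ge0.
exists (e / M); first by rewrite divr_gt0.
have n1 := normr_ge0 d1.1; have n2 := normr_ge0 d2.1.
have n3 := normr_ge0 d1.2; have n4 := normr_ge0 d2.2.
have key : forall a : R, 0 <= a -> a < M -> e / M * a < e.
  move=> a a0 aM; apply: (lt_le_trans (y := e / M * M)).
    by rewrite ltr_pM2l ?divr_gt0.
  by rewrite divfK ?gt_eqF.
move=> s t hs ht; split.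
- rewrite /= -ball_normE /ball_ /=.
  rewrite -[p.1 + _ + _]addrA opprD addrA subrr sub0r normrN.
  apply: le_lt_trans (norm2_le d1.1 d2.1 hs ht) _.
  by apply: key; rewrite /M; lra.
- rewrite /= -ball_normE /ball_ /=.
  rewrite -[p.2 + _ + _]addrA opprD addrA subrr sub0r normrN.
  apply: le_lt_trans (norm2_le d1.2 d2.2 hs ht) _.
  by apply: key; rewrite /M; lra.
Qed.

Lemma open_box (D : set PT) p d1 d2 : open D -> D p ->
  exists2 δ : R, 0 < δ & forall s t : R, `|s| < δ -> `|t| < δ ->
    D (pt2 p d1 d2 s t).
Proof.
move=> Dop Dp.
have : nbhs p D by apply: open_nbhs_nbhs; split.
move=> /nbhs_ballP [e ep He].
have [η ηp Hη] := pt2_ball p d1 d2 ep.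
by exists η => // s t hs ht; apply: He; apply: Hη.
Qed.

Lemma cont_box (W : normedModType R) (G : PT -> W) p d1 d2 :
  {for p, continuous G} -> forall e : R, 0 < e ->
  exists2 η : R, 0 < η & forall s t : R, `|s| < η -> `|t| < η ->
    `|G (pt2 p d1 d2 s t) - G p| <= e.
Proof.
move=> Gc e ep.
move/cvgrPdist_le : Gc => /(_ e ep) /nbhs_ballP [e' e'p He].
have [η ηp Hη] := pt2_ball p d1 d2 e'p.
exists η => // s t hs ht.
by rewrite distrC; apply: (He (pt2 p d1 d2 s t)); apply: Hη.
Qed.

Lemma entry_le n (M : 'rV[R]_n) (c : 'I_n) : `|M 0 c| <= `|M|.
Proof.
rewrite [leRHS]/Num.Def.normr/= mx_normrE.
by apply: le_trans; last exact: (le_bigmax _ _ (0, c)).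
Qed.

Lemma entry_leB n (M N : 'rV[R]_n) (c : 'I_n) : `|M 0 c - N 0 c| <= `|M - N|.
Proof.
have := entry_le (M - N) c.
by rewrite !mxE.
Qed.

Lemma schwarzV n (D : set PT) (g : PT -> 'rV[R]_n) p i j :
  open D -> C2_on D g -> D p ->
  pdV (cdir R j) (pdV (cdir R i) g) p = pdV (cdir R i) (pdV (cdir R j) g) p.
Proof.
move=> Dop C2 Dp.
set d1 := cdir R i; set d2 := cdir R j.
have [δ δp HD] := open_box d1 d2 Dop Dp.
apply/rowP => c.
pose P := pt2 p d1 d2.
pose Φ s t := g (P s t) 0 c.
pose Φ1 s t := pdV d1 g (P s t) 0 c.
pose Φ12 s t := pdV d2 (pdV d1 g) (P s t) 0 c.
pose Ψ s := pdV d2 g (P s 0) 0 c.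
have E : 'D_1 Ψ 0 = Φ12 0 0.
  apply: (@schwarz_abs R Φ Φ1 Φ12 Ψ δ δp).
  - move=> s t hs ht.
    have [_ Hd _] := C2 _ (HD s t hs ht).
    have [dv _] := Hd i.
    rewrite -/d1 lineR_pt2_1 in dv.
    have [dvc Ec] := comp_derive c dv.
    have := @derivable_shift R _ (fun σ => g (P σ t) 0 c) s dvc.
    by rewrite Ec /Φ1 /pdV lineR_pt2_1.
  - move=> s t hs ht.
    have [_ _ Hd] := C2 _ (HD s t hs ht).
    have [dv _] := Hd i j.
    rewrite -/d1 -/d2 lineR_pt2_2 in dv.
    have [dvc Ec] := comp_derive c dv.
    have := @derivable_shift R _ (fun τ => pdV d1 g (P s τ) 0 c) t dvc.
    by rewrite Ec /Φ12 /pdV lineR_pt2_2.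
  - move=> s hs.
    have h0 : `|0 : R| < δ by rewrite normr0.
    have [_ Hd _] := C2 _ (HD s 0 hs h0).
    have [dv _] := Hd j.
    rewrite -/d2 lineR_pt2_2 in dv.
    have [dvc Ec] := comp_derive c dv.
    have := @derivable_shift R _ (fun τ => g (P s τ) 0 c) 0 dvc.
    rewrite Ec /Ψ /pdV lineR_pt2_2.
    by [].
  - move=> e ep.
    have [_ _ Hd] := C2 _ Dp.
    have [_ Hc] := Hd i j.
    have [η ηp Hη] := cont_box d1 d2 Hc ep.
    exists η => // s t hs ht.
    rewrite /Φ12 /P pt2_00.
    apply: le_trans (Hη s t hs ht).
    exact: entry_leB.
have E2 : Φ12 0 0 = pdV d2 (pdV d1 g) p 0 c.
  rewrite /Φ12 /P (pt2_00 p d1 d2); reflexivity.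
apply: (etrans (esym E2)); apply: (etrans (esym E)).
have [_ _ Hd] := C2 _ Dp.
have [dv _] := Hd j i.
have L : lineR (pdV d2 g) p d1 = fun r => pdV d2 g (P r 0).
  rewrite -[in LHS](pt2_00 p d1 d2) lineR_pt2_1.
  apply/funext => r; rewrite add0r; reflexivity.
rewrite -/d1 -/d2 L in dv.
have [dvc Ec] := comp_derive c dv.
rewrite /pdV L -Ec; reflexivity.
Qed.

End P3.

Section P4.
Variable R : realType.
Variables t0 tau : nat.
Local Notation PT := (pt R t0 tau).

Lemma lin_continuous n m (L : {linear 'rV[R]_n -> 'rV[R]_m}) : continuous L.
Proof.
pose F := fun (i : 'I_n) (r : 'rV[R]_n) => r 0 i *: L 'e_i.
have E : (L : _ -> _) = \sum_(i < n) F i.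
  apply/funext => r; rewrite [in LHS](row_sum_delta r) linear_sum /=.
  rewrite fct_sumE.
  by apply: eq_bigr => i _; rewrite linearZ.
move=> x; rewrite E; apply: differentiable_continuous.
apply: differentiable_sum => i.
apply: differentiableZl.
exact: differentiable_coord.
Qed.

Lemma pdV_linear n m (L : {linear 'rV[R]_n -> 'rV[R]_m}) (d : PT)
   (g : PT -> 'rV[R]_n) p :
  derivable (lineR g p d) 0 1 ->
  derivable (lineR (fun q => L (g q)) p d) 0 1 /\
  pdV d (fun q => L (g q)) p = L (pdV d g p).
Proof.
move=> H.
have Q : (fun h : R => h^-1 *: ((lineR (fun q => L (g q)) p d \o shift 0) (h *: (1:R))
          - lineR (fun q => L (g q)) p d 0)) =
         L \o (fun h : R => h^-1 *: ((lineR g p d \o shift 0) (h *: (1:R)) - lineR g p d 0)).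
  apply/funext => h; rewrite /= -linearB; symmetry; exact: linearZ.
have C : (L \o (fun h : R => h^-1 *: ((lineR g p d \o shift 0) (h *: (1:R)) - lineR g p d 0)))
      @ 0^' --> L (pdV d g p).
  apply: continuous_cvg; first exact: lin_continuous.
  exact: H.
split.
  by rewrite /derivable Q; apply: cvgP C.
by rewrite /pdV /derive Q; apply: cvg_lim.
Qed.

End P4.

Section P4A.
Variable R : realType.
Variable A : falgType R.
Variables t0 tau : nat.
Local Notation PT := (pt R t0 tau).

Lemma coordAK (x : A) : ofcoordA (coordA x) = x.
Proof. exact: (passmx.rVofK (vbasisP fullv)). Qed.

Lemma ofcoordAK (r : 'rV[R]_(\dim {:A})) : coordA (ofcoordA r) = r.
Proof. exact: (passmx.vecofK (vbasisP fullv)). Qed.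

Lemma coordA_lin : linear (@coordA R A).
Proof. exact: passmx.rVof_linear. Qed.

Lemma ofcoordA_lin : linear (@ofcoordA R A).
Proof. exact: passmx.vecof_linear. Qed.

Lemma coordAD (x y : A) : coordA (x + y) = coordA x + coordA y.
Proof. by rewrite -[x]scale1r coordA_lin !scale1r. Qed.

Lemma ofcoordAD (x y : 'rV[R]_(\dim {:A})) : ofcoordA (x + y) = ofcoordA x + ofcoordA y.
Proof. by rewrite -[x]scale1r ofcoordA_lin !scale1r. Qed.

Lemma coordA0 : coordA (0 : A) = 0.
Proof. by apply: (addrI (coordA (0:A))); rewrite -coordAD !addr0. Qed.

Lemma ofcoordA0 : ofcoordA (0 : 'rV[R]_(\dim {:A})) = 0 :> A.
Proof. by apply: (addrI (ofcoordA 0)); rewrite -ofcoordAD !addr0. Qed.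

Definition dvbA (d : PT) (f : PT -> A) (p : PT) :=
  derivable (lineR (fun q => coordA (f q)) p d) 0 1.

Lemma pdA_linP (Lf : A -> A) (HL : linear Lf) d (f : PT -> A) p :
  dvbA d f p -> dvbA d (fun q => Lf (f q)) p /\
  pdA d (fun q => Lf (f q)) p = Lf (pdA d f p).
Proof.
move=> H.
pose M := fun r : 'rV[R]_(\dim {:A}) => coordA (Lf (ofcoordA r)).
have HM : linear M.
  by move=> a x y; rewrite /M ofcoordA_lin HL coordA_lin.
pose MM : {linear _ -> _} := HB.pack M (GRing.isLinear.Build _ _ _ _ M HM).
have E : (fun q => coordA (Lf (f q))) = (fun q => MM (coordA (f q))).
  by apply/funext => q; rewrite /= /M coordAK.
have [h1 h2] := pdV_linear MM H.
rewrite /dvbA /pdA E; split => //.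
by rewrite h2 /= /M coordAK.
Qed.

Lemma pdA_addP d (f g : PT -> A) p :
  dvbA d f p -> dvbA d g p -> dvbA d (fun q => f q + g q) p /\
  pdA d (fun q => f q + g q) p = pdA d f p + pdA d g p.
Proof.
move=> Hf Hg.
have E : lineR (fun q => coordA (f q + g q)) p d =
   (lineR (fun q => coordA (f q)) p d + lineR (fun q => coordA (g q)) p d).
  by apply/funext => r; rewrite /lineR /= coordAD.
rewrite /dvbA /pdA /pdV E; split; first exact: (derivableD Hf Hg).
rewrite (deriveD Hf Hg) ofcoordAD; reflexivity.
Qed.

Lemma pdA_0P d p : dvbA d (fun _ : PT => 0 : A) p /\ pdA d (fun _ : PT => 0 : A) p = 0.
Proof.
have E : lineR (fun q : PT => coordA (0 : A)) p d = cst 0.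
  by apply/funext => r; rewrite /lineR coordA0.
rewrite /dvbA /pdA /pdV E; split; first exact: derivable_cst.
by rewrite derive_cst ofcoordA0.
Qed.

Lemma pdA_sumP (I : Type) (r : seq I) (P : pred I) (fs : I -> PT -> A) d p :
  (forall i, P i -> dvbA d (fs i) p) ->
  dvbA d (fun q => \sum_(i <- r | P i) fs i q) p /\
  pdA d (fun q => \sum_(i <- r | P i) fs i q) p = \sum_(i <- r | P i) pdA d (fs i) p.
Proof.
move=> H; elim: r => [|i r [IH1 IH2]].
  have E : (fun q => \sum_(i <- [::] | P i) fs i q) = (fun _ => 0).
    by apply/funext => q; rewrite big_nil.
  rewrite E big_nil; exact: pdA_0P.
case Pi: (P i).
  have E : (fun q => \sum_(j <- i :: r | P j) fs j q) =
     (fun q => fs i q + \sum_(j <- r | P j) fs j q).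
    by apply/funext => q; rewrite big_cons Pi.
  rewrite E big_cons Pi.
  have [h1 h2] := pdA_addP (H i Pi) IH1.
  split; first exact: h1.
  rewrite h2 IH2; reflexivity.
have E : (fun q => \sum_(j <- i :: r | P j) fs j q) =
   (fun q => \sum_(j <- r | P j) fs j q).
  by apply/funext => q; rewrite big_cons Pi.
rewrite E big_cons Pi; split; [exact: IH1 | exact: IH2].
Qed.

Lemma C2_dvb (D : set PT) (f : PT -> A) p i j :
  C2_onA D f -> D p -> dvbA (cdir R j) (pdA (cdir R i) f) p.
Proof.
move=> C2 Dp; have [_ _ H] := C2 p Dp; have [H1 _] := H i j.
rewrite /dvbA /pdA.
have -> : (fun q => coordA (ofcoordA (pdV (cdir R i) (fun q0 => coordA (f q0)) q)))
  = pdV (cdir R i) (fun q0 => coordA (f q0)).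
  by apply/funext => q; rewrite ofcoordAK.
exact: H1.
Qed.

Lemma C1_dvb (D : set PT) (f : PT -> A) p i :
  C2_onA D f -> D p -> dvbA (cdir R i) f p.
Proof.
by move=> C2 Dp; have [_ H _] := C2 p Dp; have [H1 _] := H i.
Qed.

Lemma schwarzA (D : set PT) (f : PT -> A) p i j :
  open D -> C2_onA D f -> D p ->
  pdA (cdir R j) (pdA (cdir R i) f) p = pdA (cdir R i) (pdA (cdir R j) f) p.
Proof.
move=> Dop C2 Dp.
have E : forall k, (fun q => coordA (pdA (cdir R k) f q)) = pdV (cdir R k) (fun q0 => coordA (f q0)).
  by move=> k; apply/funext => q; rewrite /pdA ofcoordAK.
change (ofcoordA (pdV (cdir R j) (fun q => coordA (pdA (cdir R i) f q)) p) =
        ofcoordA (pdV (cdir R i) (fun q => coordA (pdA (cdir R j) f q)) p)).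
rewrite (E i) (E j) (@schwarzV R t0 tau _ D _ p i j Dop C2 Dp); reflexivity.
Qed.

End P4A.

Section P5.
Variable R : realType.
Variable A : falgType R.
Variable v : nat -> A.
Variables t0 tau : nat.
Local Notation PT := (pt R t0 tau).

Definition Op (e : nat) (F : stemfam A t0 tau) : stemfam A t0 tau :=
  fun K q => dbar_u v (#|K| + e) (F K) q +
    \sum_(h < tau) (-1) ^+ (sigma h K + e) *: d_beta_h h (F (symdiff1 K h)) q.

Lemma dT_Op F : dT v F = Op 0 F.
Proof.
apply/funext => K; apply/funext => q; rewrite /dT /Op addn0.
by congr (_ + _); apply: eq_bigr => h _; rewrite addn0.
Qed.

Lemma dbarT_Op F : dbarT v F = Op 1 F.
Proof.
apply/funext => K; apply/funext => q; rewrite /dbarT /Op addn1.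
reflexivity.
Qed.

Lemma mulL_lin (c : A) : linear (fun x : A => c * x).
Proof. by move=> a x y; rewrite mulrDr -scalerAr. Qed.

Lemma mulLN_lin (c : A) : linear (fun x : A => - (c * x)).
Proof. by move=> a x y; rewrite mulrDr opprD -scalerAr scalerN. Qed.

Lemma scal_lin (k : R) : linear (fun x : A => k *: x).
Proof. by move=> a x y; rewrite scalerDr !scalerA mulrC. Qed.

Lemma pdA_dbarP (d : PT) w f p :
  (forall s : 'I_t0.+1, dvbA d (d_alpha_s s f) p) ->
  dvbA d (dbar_u v w f) p /\
  pdA d (dbar_u v w f) p = pdA d (d_alpha_s ord0 f) p -
    (-1) ^+ w * \sum_(s < t0.+1 | (0 < s)%N) v s * pdA d (d_alpha_s s f) p.
Proof.
move=> H.
have Hs : forall s : 'I_t0.+1, (0 < s)%N -> dvbA d (fun q => v s * d_alpha_s s f q) p.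
  move=> s _; exact: (pdA_linP (mulL_lin (v s)) (H s)).1.
have [S1 S2] := @pdA_sumP R A t0 tau 'I_t0.+1 (index_enum 'I_t0.+1) (fun s : 'I_t0.+1 => (0 < s)%N)
   (fun (s : 'I_t0.+1) q => v s * d_alpha_s s f q) d p Hs.
have [N1 N2] := pdA_linP (mulLN_lin ((-1) ^+ w)) S1.
have [A1 A2] := pdA_addP (H ord0) N1.
split; first exact: A1.
change (pdA d (fun q => d_alpha_s ord0 f q + - ((-1) ^+ w *
   \sum_(s < t0.+1 | (0 < s)%N) v s * d_alpha_s s f q)) p = 
   pdA d (d_alpha_s ord0 f) p - (-1) ^+ w * \sum_(s < t0.+1 | (0 < s)%N) v s * pdA d (d_alpha_s s f) p).
rewrite A2 N2 S2.
congr (_ - (_ * _)).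
apply: eq_bigr => s _.
exact: (pdA_linP (mulL_lin (v s)) (H s)).2.
Qed.

Lemma pdA_OpP (d : PT) e F J p :
  (forall s : 'I_t0.+1, dvbA d (d_alpha_s s (F J)) p) ->
  (forall h : 'I_tau, dvbA d (d_beta_h h (F (symdiff1 J h))) p) ->
  pdA d (Op e F J) p =
   (pdA d (d_alpha_s ord0 (F J)) p - (-1) ^+ (#|J| + e) *
      \sum_(s < t0.+1 | (0 < s)%N) v s * pdA d (d_alpha_s s (F J)) p)
   + \sum_(h < tau) (-1) ^+ (sigma h J + e) *: pdA d (d_beta_h h (F (symdiff1 J h))) p.
Proof.
move=> Ha Hb.
have [X1 X2] := pdA_dbarP (#|J| + e) Ha.
have Hs : forall h : 'I_tau, true -> dvbA d (fun q => ((-1) ^+ (sigma h J + e) : R) *: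
     d_beta_h h (F (symdiff1 J h)) q) p.
  move=> h _; exact: (pdA_linP (scal_lin _) (Hb h)).1.
have [S1 S2] := @pdA_sumP R A t0 tau 'I_tau (index_enum 'I_tau) (fun _ => true)
   (fun (h : 'I_tau) q => ((-1) ^+ (sigma h J + e) : R) *: d_beta_h h (F (symdiff1 J h)) q) d p Hs.
have [A1 A2] := pdA_addP X1 S1.
apply: (etrans A2).
rewrite X2 S2; congr (_ + _).
apply: eq_bigr => h _.
exact: (pdA_linP (scal_lin _) (Hb h)).2.
Qed.

End P5.

Section P6.
Variable tau : nat.
Implicit Types (K : {set 'I_tau}) (h k x : 'I_tau).

Lemma in_symdiff1 K h x : (x \in symdiff1 K h) = (x \in K) (+) (x == h).
Proof.
rewrite /symdiff1 !inE.
by case: (x \in K); case: (x == h).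
Qed.

Lemma symdiff1K K h : symdiff1 (symdiff1 K h) h = K.
Proof.
apply/setP => x; rewrite !in_symdiff1.
by case: (x \in K); case: (x == h).
Qed.

Lemma symdiff1C K h k : symdiff1 (symdiff1 K h) k = symdiff1 (symdiff1 K k) h.
Proof.
apply/setP => x; rewrite !in_symdiff1.
by case: (x \in K); case: (x == h); case: (x == k).
Qed.

Lemma odd_card_symdiff1 K h : odd #|symdiff1 K h| = ~~ odd #|K|.
Proof.
case hK: (h \in K).
  have -> : symdiff1 K h = K :\ h.
    apply/setP => x; rewrite in_symdiff1 !inE.
    by case: eqP => [->|_]; rewrite ?hK //; case: (x \in K).
  by rewrite (cardsD1 h K) hK oddD /=; case: (odd _).
have -> : symdiff1 K h = h |: K.
  apply/setP => x; rewrite in_symdiff1 !inE.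
  by case: eqP => [->|_]; rewrite ?hK //; case: (x \in K).
by rewrite cardsU1 hK oddD /=.
Qed.

Lemma sigma_symdiff1 K h k :
  odd (sigma k (symdiff1 K h)) = odd (sigma k K) (+) (h <= k)%N.
Proof.
rewrite /sigma !oddb.
case hk: (h <= k)%N.
  have -> : [set x in symdiff1 K h | (x <= k)%N] = symdiff1 [set x in K | (x <= k)%N] h.
    apply/setP => x; rewrite in_symdiff1 !inE.
    case: (eqVneq x h) => [->|xh]; rewrite ?eqxx ?hk ?(negPf xh) /=.
      by case: (h \in K).
    by case: (x \in K); case: (x <= k)%N.
  by rewrite odd_card_symdiff1 addbT.
have -> : [set x in symdiff1 K h | (x <= k)%N] = [set x in K | (x <= k)%N].
  apply/setP => x; rewrite !inE.
  case: (eqVneq x h) => [->|xh]; rewrite ?eqxx ?hk ?(negPf xh) /=.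
    by rewrite !andbF.
  by case: (x \in K); case: (x <= k)%N.
by rewrite addbF.
Qed.

End P6.

Section P7.
Variable R : realType.
Variable A : falgType R.

Lemma sgn_flip (T : pzRingType) (m m' : nat) : odd m' = ~~ odd m ->
  (-1) ^+ m' = - (-1) ^+ m :> T.
Proof.
move=> H; rewrite -signr_odd H -[in RHS]signr_odd.
by case: (odd m); rewrite /= ?expr0 ?expr1 ?opprK.
Qed.

Lemma half_zero (x : A) : x + x = 0 -> x = 0.
Proof.
move=> H.
have : (2%:R : R) *: x = 0 by rewrite scaler_nat mulr2n.
move/eqP; rewrite scaler_eq0 pnatr_eq0 /=.
by move/eqP.
Qed.

Lemma antisym_sum n (w : 'I_n -> 'I_n -> A) :
  (forall h k, h != k -> w k h = - w h k) ->
  \sum_(h < n) \sum_(k < n | k != h) w h k = 0.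
Proof.
move=> H.
pose w' := fun h k : 'I_n => if k != h then w h k else 0.
have E : \sum_(h < n) \sum_(k < n | k != h) w h k = \sum_(h < n) \sum_(k < n) w' h k.
  by apply: eq_bigr => h _; rewrite big_mkcond.
have W : forall h k, w' k h = - w' h k.
  move=> h k; rewrite /w'.
  case: (eqVneq h k) => [->|hk] /=; first by rewrite oppr0.
  exact: H.
rewrite E; apply: half_zero.
rewrite [X in _ + X = 0]exchange_big /=.
rewrite -big_split /=; apply: big1 => h _.
rewrite -big_split /=; apply: big1 => k _.
by rewrite [w' k h]W subrr.
Qed.

Lemma sign_bb (tau e e' : nat) (K : {set 'I_tau}) (h k : 'I_tau) : odd (e + e') ->
  ((-1) ^+ (sigma h K + e') * (-1) ^+ (sigma k (symdiff1 K h) + e) : R) =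
  - (-1) ^+ (odd (sigma h K) (+) odd (sigma k K) (+) (h <= k)%N).
Proof.
move=> Hee.
have he : odd e' = ~~ odd e by move: Hee; rewrite oddD; case: (odd e); case: (odd e').
rewrite -signr_odd oddD he -[X in _ * X]signr_odd oddD sigma_symdiff1.
case: (odd (sigma h K)); case: (odd (sigma k K)); case: (odd e); case: (h <= k)%N;
  by rewrite /= ?expr0 ?expr1 ?mulN1r ?mul1r ?opprK.
Qed.

Lemma beta_part (tau e e' : nat) (K : {set 'I_tau})
  (Sbb : {set 'I_tau} -> 'I_tau -> 'I_tau -> A) :
  odd (e + e') -> (forall J k h, Sbb J k h = Sbb J h k) ->
  \sum_(h < tau) ((-1) ^+ (sigma h K + e') : R) *:
     \sum_(k < tau) ((-1) ^+ (sigma k (symdiff1 K h) + e) : R) *: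
        Sbb (symdiff1 (symdiff1 K h) k) k h
  = \sum_(h < tau) Sbb K h h.
Proof.
move=> Hee Hsym.
pose w := fun h k : 'I_tau => (((-1) ^+ (sigma h K + e')) * ((-1) ^+ (sigma k (symdiff1 K h) + e)) : R)
   *: Sbb (symdiff1 (symdiff1 K h) k) k h.
have E : forall h, ((-1) ^+ (sigma h K + e') : R) *:
     \sum_(k < tau) ((-1) ^+ (sigma k (symdiff1 K h) + e) : R) *:
        Sbb (symdiff1 (symdiff1 K h) k) k h = w h h + \sum_(k < tau | k != h) w h k.
  move=> h; rewrite scaler_sumr (bigD1 h) //=; congr (_ + _).
    by rewrite /w scalerA.
  by apply: eq_bigr => k _; rewrite /w scalerA.
rewrite (eq_bigr _ (fun h _ => E h)) big_split /=.
rewrite antisym_sum ?addr0.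
  apply: eq_bigr => h _.
  rewrite /w sign_bb // symdiff1K leqnn addbb /=.
  by rewrite expr1 opprK scale1r.
move=> h k hk.
have X : Sbb (symdiff1 (symdiff1 K k) h) h k = Sbb (symdiff1 (symdiff1 K h) k) k h.
  by rewrite symdiff1C Hsym.
rewrite /w X -scaleNr; congr (_ *: _); rewrite !sign_bb //.
have -> : (k <= h)%N = ~~ (h <= k)%N.
  rewrite leqNgt ltn_neqAle.
  have -> : (h != k :> nat) = true by apply/negP => /eqP /val_inj /eqP; rewrite (negPf hk).
  by [].
case: (odd (sigma h K)); case: (odd (sigma k K)); case: (h <= k)%N;
  by rewrite /= ?expr0 ?expr1 ?opprK.
Qed.

Lemma regroup (V : zmodType) (a b c d f g : V) :
  (a + b) - (c + d) + (f + g) = (a - c) + ((b - d) + f) + g.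
Proof.
by rewrite opprD -!addrA; congr (_ + _); rewrite addrCA.
Qed.

Lemma alpha_part (v : nat -> A) (t0 : nat) (Saa : 'I_t0.+1 -> 'I_t0.+1 -> A) (n n' : nat) :
  odd n' = ~~ odd n -> (forall s, Saa s ord0 = Saa ord0 s) ->
  (Saa ord0 ord0 - (-1) ^+ 1 * \sum_(r < t0.+1 | (0 < r)%N) v r * Saa r ord0)
   - (-1) ^+ 0 * \sum_(s < t0.+1 | (0 < s)%N) v s *
       (Saa ord0 s - (-1) ^+ 1 * \sum_(r < t0.+1 | (0 < r)%N) v r * Saa r s)
  = (Saa ord0 ord0 - (-1) ^+ n * \sum_(r < t0.+1 | (0 < r)%N) v r * Saa r ord0)
   - (-1) ^+ n' * \sum_(s < t0.+1 | (0 < s)%N) v s *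
       (Saa ord0 s - (-1) ^+ n * \sum_(r < t0.+1 | (0 < r)%N) v r * Saa r s).
Proof.
move=> Hn Hsym.
rewrite (@sgn_flip A _ _ Hn) -(@signr_odd A n).
pose Y := fun s : 'I_t0.+1 => \sum_(r < t0.+1 | (0 < r)%N) v r * Saa r s.
have Y0 : Y ord0 = \sum_(s < t0.+1 | (0 < s)%N) v s * Saa ord0 s.
  by apply: eq_bigr => s _; rewrite Hsym.
have E1 : forall c : A, \sum_(s < t0.+1 | (0 < s)%N) v s * (Saa ord0 s - c * Y s) =
   \sum_(s < t0.+1 | (0 < s)%N) v s * Saa ord0 s - \sum_(s < t0.+1 | (0 < s)%N) v s * (c * Y s).
  by move=> c; rewrite -sumrB; apply: eq_bigr => s _; rewrite mulrBr.
rewrite -/(Y ord0) !E1 Y0.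
set Z := \sum_(s < t0.+1 | (0 < s)%N) v s * Saa ord0 s.
case: (odd n); rewrite /= ?expr0 ?expr1 ?opprK ?mul1r; first by [].
have E2 : \sum_(s < t0.+1 | (0 < s)%N) v s * (-1 * Y s) = - \sum_(s < t0.+1 | (0 < s)%N) v s * Y s.
  by rewrite -sumrN; apply: eq_bigr => s _; rewrite mulN1r mulrN.
rewrite E2 !mulN1r.
set W := \sum_(s < t0.+1 | (0 < s)%N) v s * Y s.
have E3 : \sum_(s < t0.+1 | (0 < s)%N) v s * (1 * Y s) = W.
  by apply: eq_bigr => s _; rewrite mul1r.
by rewrite !opprK E3 opprD -!addrA addNKr addKr.
Qed.

Lemma alphabeta_part (v : nat -> A) (t0 tau : nat) (K : {set 'I_tau}) (e e' : nat)
  (Sba : {set 'I_tau} -> 'I_tau -> 'I_t0.+1 -> A)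
  (Sab : {set 'I_tau} -> 'I_t0.+1 -> 'I_tau -> A) :
  odd (e + e') -> (forall J k j, Sba J k j = Sab J j k) ->
  (\sum_(k < tau) ((-1) ^+ (sigma k K + e) : R) *: Sba (symdiff1 K k) k ord0
    - (-1) ^+ (#|K| + e') * \sum_(s < t0.+1 | (0 < s)%N) v s *
        \sum_(k < tau) ((-1) ^+ (sigma k K + e) : R) *: Sba (symdiff1 K k) k s)
  + \sum_(h < tau) ((-1) ^+ (sigma h K + e') : R) *:
      (Sab (symdiff1 K h) ord0 h - (-1) ^+ (#|symdiff1 K h| + e) *
          \sum_(r < t0.+1 | (0 < r)%N) v r * Sab (symdiff1 K h) r h) = 0.
Proof.
move=> Hee Hsym.
have he : odd e' = ~~ odd e by move: Hee; rewrite oddD; case: (odd e); case: (odd e').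
have F1 : (-1) ^+ (#|K| + e') = - (-1) ^+ (#|K| + e) :> A.
  by apply: sgn_flip; rewrite !oddD he; case: (odd #|K|); case: (odd e).
have F2 : forall h, (-1) ^+ (#|symdiff1 K h| + e) = - (-1) ^+ (#|K| + e) :> A.
  move=> h; apply: sgn_flip; rewrite !oddD odd_card_symdiff1.
  by case: (odd #|K|); case: (odd e).
have F3 : forall h, ((-1) ^+ (sigma h K + e') : R) = - (-1) ^+ (sigma h K + e).
  move=> h; apply: sgn_flip; rewrite !oddD he.
  by case: (odd (sigma h K)); case: (odd e).
set s1 := (-1) ^+ (#|K| + e) : A.
pose c := fun k : 'I_tau => ((-1) ^+ (sigma k K + e) : R).
pose T := fun k : 'I_tau => \sum_(r < t0.+1 | (0 < r)%N) v r * Sab (symdiff1 K k) r k.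
pose U := \sum_(k < tau) c k *: (- s1 * T k).
pose Q := \sum_(k < tau) c k *: Sab (symdiff1 K k) ord0 k.
have EA : \sum_(k < tau) ((-1) ^+ (sigma k K + e) : R) *: Sba (symdiff1 K k) k ord0 = Q.
  by apply: eq_bigr => k _; rewrite Hsym.
have EB : (-1) ^+ (#|K| + e') * \sum_(s < t0.+1 | (0 < s)%N) v s *
        \sum_(k < tau) ((-1) ^+ (sigma k K + e) : R) *: Sba (symdiff1 K k) k s = U.
  rewrite F1 -/s1.
  have -> : \sum_(s < t0.+1 | (0 < s)%N) v s *
        \sum_(k < tau) ((-1) ^+ (sigma k K + e) : R) *: Sba (symdiff1 K k) k s
      = \sum_(k < tau) c k *: T k.
    rewrite (eq_bigr (fun s : 'I_t0.+1 => \sum_(k < tau) c k *: (v s * Sab (symdiff1 K k) s k))); last first.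
      move=> s _; rewrite mulr_sumr; apply: eq_bigr => k _.
      by rewrite Hsym -scalerAr.
    rewrite exchange_big /=; apply: eq_bigr => k _.
    by rewrite /T scaler_sumr.
  rewrite mulr_sumr; apply: eq_bigr => k _.
  by rewrite -scalerAr.
have EC : \sum_(h < tau) ((-1) ^+ (sigma h K + e') : R) *:
      (Sab (symdiff1 K h) ord0 h - (-1) ^+ (#|symdiff1 K h| + e) *
          \sum_(r < t0.+1 | (0 < r)%N) v r * Sab (symdiff1 K h) r h) = U - Q.
  rewrite /U /Q -sumrB; apply: eq_bigr => h _.
  by rewrite F2 F3 -/s1 scaleNr scalerBr opprB.
by rewrite EA EB EC addrA subrK subrr.
Qed.

Lemma sum_mulDr (v : nat -> A) (t0 : nat) (x y : 'I_t0.+1 -> A) :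
  \sum_(s < t0.+1 | (0 < s)%N) v s * (x s + y s) =
  \sum_(s < t0.+1 | (0 < s)%N) v s * x s + \sum_(s < t0.+1 | (0 < s)%N) v s * y s.
Proof. by rewrite -big_split; apply: eq_bigr => s _; rewrite mulrDr. Qed.

Lemma sum_scaleDr (tau : nat) (c : 'I_tau -> R) (x y : 'I_tau -> A) :
  \sum_(h < tau) c h *: (x h + y h) =
  \sum_(h < tau) c h *: x h + \sum_(h < tau) c h *: y h.
Proof. by rewrite -big_split; apply: eq_bigr => s _; rewrite scalerDr. Qed.

Lemma algebra_main (v : nat -> A) (t0 tau : nat) (K : {set 'I_tau}) (e e' : nat)
  (Saa : 'I_t0.+1 -> 'I_t0.+1 -> A)
  (Sba : {set 'I_tau} -> 'I_tau -> 'I_t0.+1 -> A)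
  (Sab : {set 'I_tau} -> 'I_t0.+1 -> 'I_tau -> A)
  (Sbb : {set 'I_tau} -> 'I_tau -> 'I_tau -> A) :
  odd (e + e') ->
  (forall s, Saa s ord0 = Saa ord0 s) ->
  (forall J k j, Sba J k j = Sab J j k) ->
  (forall J k h, Sbb J k h = Sbb J h k) ->
  (Saa ord0 ord0 - (-1) ^+ 1 * \sum_(r < t0.+1 | (0 < r)%N) v r * Saa r ord0)
   - (-1) ^+ 0 * \sum_(s < t0.+1 | (0 < s)%N) v s *
       (Saa ord0 s - (-1) ^+ 1 * \sum_(r < t0.+1 | (0 < r)%N) v r * Saa r s)
   + \sum_(h < tau) Sbb K h h
  =
  ((Saa ord0 ord0 - (-1) ^+ (#|K| + e) * \sum_(r < t0.+1 | (0 < r)%N) v r * Saa r ord0)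
     + \sum_(k < tau) ((-1) ^+ (sigma k K + e) : R) *: Sba (symdiff1 K k) k ord0)
  - (-1) ^+ (#|K| + e') * \sum_(s < t0.+1 | (0 < s)%N) v s *
     ((Saa ord0 s - (-1) ^+ (#|K| + e) * \sum_(r < t0.+1 | (0 < r)%N) v r * Saa r s)
       + \sum_(k < tau) ((-1) ^+ (sigma k K + e) : R) *: Sba (symdiff1 K k) k s)
  + \sum_(h < tau) ((-1) ^+ (sigma h K + e') : R) *:
     ((Sab (symdiff1 K h) ord0 h - (-1) ^+ (#|symdiff1 K h| + e) *
          \sum_(r < t0.+1 | (0 < r)%N) v r * Sab (symdiff1 K h) r h)
      + \sum_(k < tau) ((-1) ^+ (sigma k (symdiff1 K h) + e) : R) *:
          Sbb (symdiff1 (symdiff1 K h) k) k h).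
Proof.
move=> Hee HAA HAB HBB.
have Hn : odd (#|K| + e') = ~~ odd (#|K| + e).
  move: Hee; rewrite !oddD; case: (odd e); case: (odd e'); case: (odd #|K|) => //.
set m := (-1) ^+ (#|K| + e') : A.
rewrite [in RHS]sum_mulDr [in RHS]sum_scaleDr [m * (_ + _)]mulrDr [in RHS]regroup.
rewrite alphabeta_part // addr0 beta_part //.
by rewrite /m (@alpha_part v t0 Saa (#|K| + e) (#|K| + e')).
Qed.

End P7.

Section P8.
Variable R : realType.
Variable A : falgType R.
Variable v : nat -> A.
Variables t0 tau : nat.
Variable D : set (pt R t0 tau).
Variable F : stemfam A t0 tau.
Hypothesis Dop : open D.
Hypothesis C2 : forall K, C2_onA D (F K).
Variable p : pt R t0 tau.
Hypothesis Dp : D p.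

Lemma LA (K : {set 'I_tau}) (j : 'I_t0.+1) :
  d_alpha_s j (dbar_u v 1 (F K)) p =
  d_alpha_s j (d_alpha_s ord0 (F K)) p - (-1) ^+ 1 *
    \sum_(r < t0.+1 | (0 < r)%N) v r * d_alpha_s j (d_alpha_s r (F K)) p.
Proof.
have H : forall s : 'I_t0.+1, dvbA (dirA R tau j) (d_alpha_s s (F K)) p.
  move=> s; exact: (@C2_dvb R A t0 tau D (F K) p (inl s) (inl j) (C2 K) Dp).
exact: (@pdA_dbarP R A v t0 tau (dirA R tau j) 1 (F K) p H).2.
Qed.

Lemma OA e (K : {set 'I_tau}) (j : 'I_t0.+1) :
  d_alpha_s j (Op v e F K) p =
   (d_alpha_s j (d_alpha_s ord0 (F K)) p - (-1) ^+ (#|K| + e) *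
      \sum_(r < t0.+1 | (0 < r)%N) v r * d_alpha_s j (d_alpha_s r (F K)) p)
   + \sum_(k < tau) ((-1) ^+ (sigma k K + e) : R) *:
        d_alpha_s j (d_beta_h k (F (symdiff1 K k))) p.
Proof.
have Ha : forall s : 'I_t0.+1, dvbA (dirA R tau j) (d_alpha_s s (F K)) p.
  move=> s; exact: (@C2_dvb R A t0 tau D (F K) p (inl s) (inl j) (C2 K) Dp).
have Hb : forall h : 'I_tau, dvbA (dirA R tau j) (d_beta_h h (F (symdiff1 K h))) p.
  move=> h; exact: (@C2_dvb R A t0 tau D (F (symdiff1 K h)) p (inr h) (inl j) (C2 _) Dp).
exact: (@pdA_OpP R A v t0 tau (dirA R tau j) e F K p Ha Hb).
Qed.

Lemma OB e (J : {set 'I_tau}) (h : 'I_tau) :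
  d_beta_h h (Op v e F J) p =
   (d_beta_h h (d_alpha_s ord0 (F J)) p - (-1) ^+ (#|J| + e) *
      \sum_(r < t0.+1 | (0 < r)%N) v r * d_beta_h h (d_alpha_s r (F J)) p)
   + \sum_(k < tau) ((-1) ^+ (sigma k J + e) : R) *:
        d_beta_h h (d_beta_h k (F (symdiff1 J k))) p.
Proof.
have Ha : forall s : 'I_t0.+1, dvbA (dirB R t0 h) (d_alpha_s s (F J)) p.
  move=> s; exact: (@C2_dvb R A t0 tau D (F J) p (inl s) (inr h) (C2 J) Dp).
have Hb : forall k : 'I_tau, dvbA (dirB R t0 h) (d_beta_h k (F (symdiff1 J k))) p.
  move=> k; exact: (@C2_dvb R A t0 tau D (F (symdiff1 J k)) p (inr k) (inr h) (C2 _) Dp).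
exact: (@pdA_OpP R A v t0 tau (dirB R t0 h) e F J p Ha Hb).
Qed.

Lemma main_eq e e' (K : {set 'I_tau}) : odd (e + e') ->
  LapT v F K p = Op v e' (Op v e F) K p.
Proof.
move=> Hee.
pose Saa := fun i j : 'I_t0.+1 => d_alpha_s j (d_alpha_s i (F K)) p.
pose Sba := fun (J : {set 'I_tau}) (k : 'I_tau) (j : 'I_t0.+1) => d_alpha_s j (d_beta_h k (F J)) p.
pose Sab := fun (J : {set 'I_tau}) (i : 'I_t0.+1) (h : 'I_tau) => d_beta_h h (d_alpha_s i (F J)) p.
pose Sbb := fun (J : {set 'I_tau}) (k h : 'I_tau) => d_beta_h h (d_beta_h k (F J)) p.
have HAA : forall s, Saa s ord0 = Saa ord0 s.
  move=> s; exact: (@schwarzA R A t0 tau D (F K) p (inl s) (inl ord0) Dop (C2 K) Dp).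
have HAB : forall J k j, Sba J k j = Sab J j k.
  move=> J k j; exact: (@schwarzA R A t0 tau D (F J) p (inr k) (inl j) Dop (C2 J) Dp).
have HBB : forall J k h, Sbb J k h = Sbb J h k.
  move=> J k h; exact: (@schwarzA R A t0 tau D (F J) p (inr k) (inr h) Dop (C2 J) Dp).
have AM := @algebra_main R A v t0 tau K e e' Saa Sba Sab Sbb Hee HAA HAB HBB.
have EL : LapT v F K p =
  (Saa ord0 ord0 - (-1) ^+ 1 * \sum_(r < t0.+1 | (0 < r)%N) v r * Saa r ord0)
   - (-1) ^+ 0 * \sum_(s < t0.+1 | (0 < s)%N) v s *
       (Saa ord0 s - (-1) ^+ 1 * \sum_(r < t0.+1 | (0 < r)%N) v r * Saa r s)
   + \sum_(h < tau) Sbb K h h.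
  rewrite -[LapT v F K p]/(d_alpha_s ord0 (dbar_u v 1 (F K)) p - (-1) ^+ 0 *
    \sum_(s < t0.+1 | (0 < s)%N) v s * d_alpha_s s (dbar_u v 1 (F K)) p
    + \sum_(h < tau) d_beta_h h (d_beta_h h (F K)) p).
  have LAs : \sum_(s < t0.+1 | (0 < s)%N) v s * d_alpha_s s (dbar_u v 1 (F K)) p =
     \sum_(s < t0.+1 | (0 < s)%N) v s *
       (Saa ord0 s - (-1) ^+ 1 * \sum_(r < t0.+1 | (0 < r)%N) v r * Saa r s).
    apply: eq_bigr => s _; rewrite LA; reflexivity.
  rewrite (LA K ord0) LAs; reflexivity.
have ER : Op v e' (Op v e F) K p =
  ((Saa ord0 ord0 - (-1) ^+ (#|K| + e) * \sum_(r < t0.+1 | (0 < r)%N) v r * Saa r ord0)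
     + \sum_(k < tau) ((-1) ^+ (sigma k K + e) : R) *: Sba (symdiff1 K k) k ord0)
  - (-1) ^+ (#|K| + e') * \sum_(s < t0.+1 | (0 < s)%N) v s *
     ((Saa ord0 s - (-1) ^+ (#|K| + e) * \sum_(r < t0.+1 | (0 < r)%N) v r * Saa r s)
       + \sum_(k < tau) ((-1) ^+ (sigma k K + e) : R) *: Sba (symdiff1 K k) k s)
  + \sum_(h < tau) ((-1) ^+ (sigma h K + e') : R) *:
     ((Sab (symdiff1 K h) ord0 h - (-1) ^+ (#|symdiff1 K h| + e) *
          \sum_(r < t0.+1 | (0 < r)%N) v r * Sab (symdiff1 K h) r h)
      + \sum_(k < tau) ((-1) ^+ (sigma k (symdiff1 K h) + e) : R) *:
          Sbb (symdiff1 (symdiff1 K h) k) k h).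
  rewrite -[Op v e' (Op v e F) K p]/(d_alpha_s ord0 (Op v e F K) p - (-1) ^+ (#|K| + e') *
    \sum_(s < t0.+1 | (0 < s)%N) v s * d_alpha_s s (Op v e F K) p
    + \sum_(h < tau) ((-1) ^+ (sigma h K + e') : R) *: d_beta_h h (Op v e F (symdiff1 K h)) p).
  have S1 : \sum_(s < t0.+1 | (0 < s)%N) v s * d_alpha_s s (Op v e F K) p =
     \sum_(s < t0.+1 | (0 < s)%N) v s *
     ((Saa ord0 s - (-1) ^+ (#|K| + e) * \sum_(r < t0.+1 | (0 < r)%N) v r * Saa r s)
       + \sum_(k < tau) ((-1) ^+ (sigma k K + e) : R) *: Sba (symdiff1 K k) k s).
    apply: eq_bigr => s _; rewrite OA; reflexivity.
  have S2 : \sum_(h < tau) ((-1) ^+ (sigma h K + e') : R) *: d_beta_h h (Op v e F (symdiff1 K h)) p =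
     \sum_(h < tau) ((-1) ^+ (sigma h K + e') : R) *:
     ((Sab (symdiff1 K h) ord0 h - (-1) ^+ (#|symdiff1 K h| + e) *
          \sum_(r < t0.+1 | (0 < r)%N) v r * Sab (symdiff1 K h) r h)
      + \sum_(k < tau) ((-1) ^+ (sigma k (symdiff1 K h) + e) : R) *:
          Sbb (symdiff1 (symdiff1 K h) k) k h).
    apply: eq_bigr => h _; rewrite OB; reflexivity.
  rewrite (OA e K ord0) S1 S2; reflexivity.
rewrite EL ER; exact: AM.
Qed.

End P8.

Unset Implicit Arguments.
Theorem lemma3p5 (R : realType) (A : falgType R) (star : A -> A)
  (N : nat) (v : nat -> A) (tau t0 : nat) (t : 'I_tau.+1 -> nat)
  (D : set (pt R t0 tau)) (F : stemfam A t0 tau) :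
  is_star_involution star ->
  clifford_basis N v ->
  T_sequence N t -> t ord0 = t0 ->
  open D -> flip_invariant D ->
  is_stem D F -> (forall K, C2_onA D (F K)) ->
  forall (K : {set 'I_tau}) (p : pt R t0 tau), D p ->
    LapT v F K p = dT v (dbarT v F) K p /\
    LapT v F K p = dbarT v (dT v F) K p.
Proof.
move=> _ _ _ _ Dop _ _ C2 K p Dp.
rewrite !dT_Op !dbarT_Op; split.
  exact: (@main_eq R A v t0 tau D F Dop C2 p Dp 1 0 K isT).
exact: (@main_eq R A v t0 tau D F Dop C2 p Dp 0 1 K isT).
Qed.
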